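(* Let $\lambda=\frac{3+\sqrt{5}}{2}$, let $(f_n)_{n\geq 0}$ be the Fibonacci numbers, and for a positive integer $l$ let $\phi_l$ be the $l$-th cyclotomic polynomial. For every positive integer $n$, writing $\operatorname{res}$ for the resultant: (1) $\operatorname{res}\{(x-\lambda^n)(x-\lambda^{-n}),\phi_5\}=5^2(5f_n^4+5f_n^2+1)^2$ if $n$ is even, and $=(5^2f_n^4-15f_n^2+1)^2$ if $n$ is odd; (2) $\operatorname{res}\{(x-\lambda^n)(x-\lambda^{-n}),\phi_{10}\}=(5^2f_n^4+15f_n^2+1)^2$ if $n$ is even, and $=5^2(5f_n^4-5f_n^2+1)^2$ if $n$ is odd; (3) $\operatorname{res}\{(x-\lambda^n)(x-\lambda^{-n}),\phi_{25}\}=5^2(5f_{5n}^4+5f_{5n}^2+1)^2$ if $n$ is even, and $=(5^2f_{5n}^4-15f_{5n}^2+1)^2$ if $n$ is odd; (4) $\operatorname{res}\{(x-\lambda^n)(x-\lambda^{-n}),\phi_{50}\}=(5^2f_{5n}^4+15f_{5n}^2+1)^2$ if $n$ is even, and $=5^2(5f_{5n}^4-5f_{5n}^2+1)^2$ if $n$ is odd.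
   Context: The Fibonacci numbers are $f_0=0$, $f_1=1$, $f_{n+2}=f_{n+1}+f_n$. For polynomials $P,Q$ without common complex roots, $\operatorname{res}\{P,Q\}=\prod_{P(u)=0,\,Q(v)=0}(u-v)$ (roots counted with multiplicity). *)

(* Defs.v *)
From HB Require Import structures.
From mathcomp Require Import all_boot all_order all_algebra all_field.
Set Implicit Arguments. Unset Strict Implicit. Unset Printing Implicit Defensive.
Import Order.TTheory GRing.Theory Num.Theory.
Local Open Scope ring_scope.

Fixpoint fib (n : nat) : nat :=
  match n with
  | 0 => 0
  | 1 => 1
  | (m.+1 as k).+1 => (fib k + fib m)%N
  end.

(* The multiset of complex roots of p (with multiplicity), obtained from the
   complete factorisation p = lead_coef p * prod (X - z) over algC. *)
Definition rootsC (p : {poly algC}) : seq algC := sval (closed_field_poly_normal p).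

Definition resC (P Q : {poly algC}) : algC :=
  \prod_(u <- rootsC P) \prod_(v <- rootsC Q) (u - v).

Definition lam : algC := (3 + sqrtC 5) / 2.

Definition phiC (l : nat) : {poly algC} := map_poly intr ('Phi_l).

Definition Pn (n : nat) : {poly algC} :=
  ('X - (lam ^+ n)%:P) * ('X - (lam ^- n)%:P).

(* Main.v *)
Require Import Defs.
From HB Require Import structures.
From mathcomp Require Import all_boot all_order all_algebra all_field.
From mathcomp Require Import ring.
Import Order.TTheory GRing.Theory Num.Theory.
Local Open Scope ring_scope.

Lemma Phi1 : 'Phi_1 = 'X - 1.
Proof.
have := prod_Cyclotomic (isT : (0 < 1)%N).
by rewrite (_ : divisors 1 = [:: 1%N]) // big_seq1 expr1.
Qed.

Lemma Phi2 : 'Phi_2 = 'X + 1.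
Proof.
have := prod_Cyclotomic (isT : (0 < 2)%N).
rewrite (_ : divisors 2 = [:: 1; 2]%N) // !big_cons big_nil mulr1.
move=> H; apply: (mulfI (monic_neq0 (Cyclotomic_monic 1))).
rewrite H Phi1; ring.
Qed.

Lemma Phi5 : 'Phi_5 = 'X^4 + 'X^3 + 'X^2 + 'X + 1.
Proof.
have := prod_Cyclotomic (isT : (0 < 5)%N).
rewrite (_ : divisors 5 = [:: 1; 5]%N) // !big_cons big_nil mulr1.
move=> H; apply: (mulfI (monic_neq0 (Cyclotomic_monic 1))).
rewrite H Phi1; ring.
Qed.

Lemma Phi10 : 'Phi_10 = 'X^4 - 'X^3 + 'X^2 - 'X + 1.
Proof.
have := prod_Cyclotomic (isT : (0 < 10)%N).
rewrite (_ : divisors 10 = [:: 1; 2; 5; 10]%N) // !big_cons big_nil mulr1.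
rewrite !mulrA => H.
have M : 'Phi_1 * 'Phi_2 * 'Phi_5 != 0.
  by apply: monic_neq0; rewrite !monicMl ?Cyclotomic_monic.
apply: (mulfI M); rewrite H Phi1 Phi2 Phi5; ring.
Qed.

Lemma Phi25 : 'Phi_25 = 'X^20 + 'X^15 + 'X^10 + 'X^5 + 1.
Proof.
have := prod_Cyclotomic (isT : (0 < 25)%N).
rewrite (_ : divisors 25 = [:: 1; 5; 25]%N) // !big_cons big_nil mulr1.
rewrite !mulrA => H.
have M : 'Phi_1 * 'Phi_5 != 0.
  by apply: monic_neq0; rewrite !monicMl ?Cyclotomic_monic.
apply: (mulfI M); rewrite H Phi1 Phi5; ring.
Qed.

Lemma Phi50 : 'Phi_50 = 'X^20 - 'X^15 + 'X^10 - 'X^5 + 1.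
Proof.
have := prod_Cyclotomic (isT : (0 < 50)%N).
rewrite (_ : divisors 50 = [:: 1; 2; 5; 10; 25; 50]%N) // !big_cons big_nil mulr1.
rewrite !mulrA => H.
have M : 'Phi_1 * 'Phi_2 * 'Phi_5 * 'Phi_10 * 'Phi_25 != 0.
  by apply: monic_neq0; rewrite !monicMl ?Cyclotomic_monic.
apply: (mulfI M); rewrite H Phi1 Phi2 Phi5 Phi10 Phi25; ring.
Qed.

Lemma rootsC_monic {p : {poly algC}} : p \is monic ->
  p = \prod_(z <- rootsC p) ('X - z%:P).
Proof.
move=> mp; rewrite /rootsC; case: (closed_field_poly_normal p) => r /= Hr.
by rewrite {1}Hr (eqP mp) scale1r.
Qed.

Lemma size_rootsC {p : {poly algC}} : p \is monic ->
  size p = (size (rootsC p)).+1.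
Proof. by move=> mp; rewrite {1}(rootsC_monic mp) size_prod_XsubC. Qed.

Lemma Pn_monic n : Pn n \is monic.
Proof. by rewrite /Pn monicMl monicXsubC. Qed.

Lemma size_Pn n : size (Pn n) = 3%N.
Proof.
by rewrite /Pn size_mul ?polyXsubC_eq0 // !size_XsubC.
Qed.

Lemma resC_Pn n (Q : {poly algC}) : Q \is monic ->
  resC (Pn n) Q = Q.[lam ^+ n] * Q.[lam ^- n].
Proof.
move=> mQ.
have := size_rootsC (Pn_monic n); rewrite size_Pn.
have HP := rootsC_monic (Pn_monic n).
rewrite /resC; case: (rootsC (Pn n)) HP => [|u1 [|u2 [|u3 r]]] //= HP _.
rewrite exchange_big /=.
have HQ := rootsC_monic mQ.
move: HQ; set r := rootsC Q => HQ. rewrite HQ !horner_prod -big_split /=.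
apply: eq_bigr => v _.
rewrite big_cons big_seq1 !hornerE.
have : (Pn n).[v] = (v - u1) * (v - u2).
  by rewrite HP big_cons big_seq1 !hornerE.
rewrite /Pn !hornerE => E.
have -> : (u1 - v) * (u2 - v) = (v - u1) * (v - u2) by ring.
by rewrite -E; ring.
Qed.

Section Lam.
Let s : algC := sqrtC 5.
Let ph : algC := (1 + s) / 2.
Let ps : algC := (1 - s) / 2.
Let s2 : s ^+ 2 = 5. Proof. exact: sqrtCK. Qed.
Let two_nz : (2 : algC) != 0. Proof. by rewrite pnatr_eq0. Qed.

Let ph2 : ph ^+ 2 = ph + 1.
Proof.
rewrite /ph; have -> : ((1 + s) / 2) ^+ 2 = (1 + 2 * s + s ^+ 2) / 4 by field.
by rewrite s2; field.
Qed.
Let ps2 : ps ^+ 2 = ps + 1.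
Proof.
rewrite /ps; have -> : ((1 - s) / 2) ^+ 2 = (1 - 2 * s + s ^+ 2) / 4 by field.
by rewrite s2; field.
Qed.
Let phps : ph * ps = -1.
Proof.
rewrite /ph /ps; have -> : (1 + s) / 2 * ((1 - s) / 2) = (1 - s ^+ 2) / 4 by field.
by rewrite s2; field.
Qed.
Let lamE : lam = ph ^+ 2.
Proof.
rewrite /lam -/s /ph; have -> : ((1 + s) / 2) ^+ 2 = (1 + 2 * s + s ^+ 2) / 4 by field.
by rewrite s2; field.
Qed.

Let fibE n : s * (fib n)%:R = ph ^+ n - ps ^+ n /\
             s * (fib n.+1)%:R = ph ^+ n.+1 - ps ^+ n.+1.
Proof.
elim: n => [|n [IH1 IH2]].
  by split; rewrite /= ?mulr0 ?expr0 ?subrr // mulr1 !expr1 /ph /ps; field.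
split=> //.
rewrite (_ : fib n.+2 = fib n.+1 + fib n)%N // natrD mulrDr IH1 IH2.
have Eph : ph ^+ n.+2 = ph ^+ n.+1 + ph ^+ n by rewrite -addn2 exprD ph2 exprS; ring.
have Eps : ps ^+ n.+2 = ps ^+ n.+1 + ps ^+ n by rewrite -addn2 exprD ps2 exprS; ring.
rewrite Eph Eps; ring.
Qed.

Lemma lam_sum m : lam ^+ m + lam ^- m = 5 * (fib m)%:R ^+ 2 + 2 * (-1) ^+ m.
Proof.
have [E _] := fibE m.
have Hinv : lam ^- m = ps ^+ (2 * m).
  rewrite lamE -exprM.
  have nz : ph ^+ (2 * m) != 0.
    by apply/negP => /eqP/eqP; rewrite expf_eq0 => /andP[_ /eqP Z]; move: phps; rewrite Z mul0r => /eqP; rewrite eq_sym oppr_eq0 oner_eq0.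
  apply: (mulfI nz); rewrite mulfV // -exprMn phps exprM.
  by rewrite sqrrN !expr1n.
rewrite Hinv lamE -exprM !(mulnC 2) !exprM.
have -> : 5 * (fib m)%:R ^+ 2 = (s * (fib m)%:R) ^+ 2 by rewrite exprMn s2.
rewrite E -phps [(ph * ps) ^+ m]exprMn; ring.
Qed.
End Lam.

Lemma inv_of {a b : algC} : a * b = 1 -> b = a^-1.
Proof.
move=> ab; have nz : a != 0 by apply/eqP => Z; move: ab; rewrite Z mul0r => /eqP; rewrite eq_sym oner_eq0.
by rewrite -[b](mulKf nz) ab mulr1.
Qed.

Lemma nz_of {a b : algC} : a * b = 1 -> a != 0.
Proof. by move=> ab; apply/eqP => Z; move: ab; rewrite Z mul0r => /eqP; rewrite eq_sym oner_eq0. Qed.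

Lemma key5 (a b : algC) : a * b = 1 ->
  (a ^+ 4 + a ^+ 3 + a ^+ 2 + a + 1) * (b ^+ 4 + b ^+ 3 + b ^+ 2 + b + 1) =
  ((a + b) ^+ 2 + (a + b) - 1) ^+ 2.
Proof. move=> ab; have nz := nz_of ab; rewrite (inv_of ab); by field. Qed.

Lemma key10 (a b : algC) : a * b = 1 ->
  (a ^+ 4 - a ^+ 3 + a ^+ 2 - a + 1) * (b ^+ 4 - b ^+ 3 + b ^+ 2 - b + 1) =
  ((a + b) ^+ 2 - (a + b) - 1) ^+ 2.
Proof. move=> ab; have nz := nz_of ab; rewrite (inv_of ab); by field. Qed.

Lemma key25 (a b : algC) : a * b = 1 ->
  (a ^+ 20 + a ^+ 15 + a ^+ 10 + a ^+ 5 + 1) * (b ^+ 20 + b ^+ 15 + b ^+ 10 + b ^+ 5 + 1) =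
  ((a ^+ 5 + b ^+ 5) ^+ 2 + (a ^+ 5 + b ^+ 5) - 1) ^+ 2.
Proof.
move=> ab; have ab5 : a ^+ 5 * b ^+ 5 = 1 by rewrite -exprMn ab expr1n.
have := key5 _ _ ab5.
by rewrite -!exprM => H; exact: H.
Qed.

Lemma key50 (a b : algC) : a * b = 1 ->
  (a ^+ 20 - a ^+ 15 + a ^+ 10 - a ^+ 5 + 1) * (b ^+ 20 - b ^+ 15 + b ^+ 10 - b ^+ 5 + 1) =
  ((a ^+ 5 + b ^+ 5) ^+ 2 - (a ^+ 5 + b ^+ 5) - 1) ^+ 2.
Proof.
move=> ab; have ab5 : a ^+ 5 * b ^+ 5 = 1 by rewrite -exprMn ab expr1n.
have := key10 _ _ ab5.
by rewrite -!exprM => H; exact: H.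
Qed.

Lemma lam_nz : lam != 0.
Proof.
apply/eqP => Z; have := lam_sum 1; rewrite Z expr1 invr0 addr0 /=.
have -> : (5 * 1%:R ^+ 2 + 2 * (-1) ^+ 1 : algC) = 3 by ring.
by move/eqP; rewrite eq_sym pnatr_eq0.
Qed.

Lemma ab_lam m : lam ^+ m * lam ^- m = 1.
Proof. by rewrite mulfV // expf_neq0 // lam_nz. Qed.

Lemma phiC_monic l : phiC l \is monic.
Proof. exact: monic_map (Cyclotomic_monic l). Qed.

Lemma ev5 x : (phiC 5).[x] = x ^+ 4 + x ^+ 3 + x ^+ 2 + x + 1.
Proof. by rewrite /phiC Phi5 !(rmorphD, rmorphB, rmorphN, rmorph1, rmorphXn) /= map_polyX !hornerE. Qed.
Lemma ev10 x : (phiC 10).[x] = x ^+ 4 - x ^+ 3 + x ^+ 2 - x + 1.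
Proof. by rewrite /phiC Phi10 !(rmorphD, rmorphB, rmorphN, rmorph1, rmorphXn) /= map_polyX !hornerE. Qed.
Lemma ev25 x : (phiC 25).[x] = x ^+ 20 + x ^+ 15 + x ^+ 10 + x ^+ 5 + 1.
Proof. by rewrite /phiC Phi25 !(rmorphD, rmorphB, rmorphN, rmorph1, rmorphXn) /= map_polyX !hornerE. Qed.
Lemma ev50 x : (phiC 50).[x] = x ^+ 20 - x ^+ 15 + x ^+ 10 - x ^+ 5 + 1.
Proof. by rewrite /phiC Phi50 !(rmorphD, rmorphB, rmorphN, rmorph1, rmorphXn) /= map_polyX !hornerE. Qed.

Lemma sgnE m : (-1) ^+ m = (if odd m then -1 else 1 : algC).
Proof. by rewrite -signr_odd; case: (odd m); rewrite ?expr1 ?expr0. Qed.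

Theorem mainTheorem6 (n : nat) : (0 < n)%N ->
  let f : algC := (fib n)%:R in
  let g : algC := (fib (5 * n))%:R in
  [/\ resC (Pn n) (phiC 5) =
        (if ~~ odd n then 5 ^+ 2 * (5 * f ^+ 4 + 5 * f ^+ 2 + 1) ^+ 2
         else (5 ^+ 2 * f ^+ 4 - 15 * f ^+ 2 + 1) ^+ 2),
      resC (Pn n) (phiC 10) =
        (if ~~ odd n then (5 ^+ 2 * f ^+ 4 + 15 * f ^+ 2 + 1) ^+ 2
         else 5 ^+ 2 * (5 * f ^+ 4 - 5 * f ^+ 2 + 1) ^+ 2),
      resC (Pn n) (phiC 25) =
        (if ~~ odd n then 5 ^+ 2 * (5 * g ^+ 4 + 5 * g ^+ 2 + 1) ^+ 2
         else (5 ^+ 2 * g ^+ 4 - 15 * g ^+ 2 + 1) ^+ 2)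
    & resC (Pn n) (phiC 50) =
        (if ~~ odd n then (5 ^+ 2 * g ^+ 4 + 15 * g ^+ 2 + 1) ^+ 2
         else 5 ^+ 2 * (5 * g ^+ 4 - 5 * g ^+ 2 + 1) ^+ 2)].
Proof.
move=> _ f g.
have E5 : lam ^+ n ^+ 5 + lam ^- n ^+ 5 = 5 * g ^+ 2 + 2 * (-1) ^+ n.
  rewrite exprVn -!exprM (mulnC n 5) lam_sum -/g.
  by rewrite !sgnE oddM /=.
split.
- rewrite resC_Pn ?phiC_monic // !ev5 key5 ?ab_lam // lam_sum -/f sgnE.
  by case: (odd n) => /=; ring.
- rewrite resC_Pn ?phiC_monic // !ev10 key10 ?ab_lam // lam_sum -/f sgnE.
  by case: (odd n) => /=; ring.
- rewrite resC_Pn ?phiC_monic // !ev25 key25 ?ab_lam // E5 sgnE.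
  by case: (odd n) => /=; ring.
- rewrite resC_Pn ?phiC_monic // !ev50 key50 ?ab_lam // E5 sgnE.
  by case: (odd n) => /=; ring.
Qed.
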